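(* For all integers $n\ge 3$ and all integers $d$, $$b_n^d=v_{n-1}^{d-2},\qquad w_n^d=v_{n-1}^d+w_{n-1}^{d-1}+v_{n-2}^{d-2},\qquad v_n^d=v_{n-1}^d+w_{n-1}^{d-1}+v_{n-1}^{d-2}+v_{n-2}^{d-2}.$$
   Context: The $2\times n$ Miura-ori $M_{2,n}$ ($n\ge1$) has faces $\alpha_{i,j}$ ($i\in\{1,2\}$, $j\in\{1,\dots,n\}$), interior vertices $x_1,\dots,x_{n-1}$, and creases $e_0$ and $e_{3k-1},e_{3k},e_{3k+1}$ ($k=1,\dots,n-1$). At $x_k$ the creases are left $e_{3k-3}$, top $e_{3k-1}$, right $e_{3k}$, bottom $e_{3k+1}$. Face $\alpha_{1,j}$ is bordered by those of $e_{3j-4}$ (iff $j\ge2$), $e_{3j-3}$, $e_{3j-1}$ (iff $j\le n-1$); $\alpha_{2,j}$ by those of $e_{3j-2}$ (iff $j\ge2$), $e_{3j-3}$, $e_{3j+1}$ (iff $j\le n-1$). An MV assignment $\mu$ maps creases to $\{1,-1\}$; it is locally valid if for each $k$ exactly one of $\mu(e_{3k-1}),\mu(e_{3k}),\mu(e_{3k+1})$ differs from $\mu(e_{3k-3})$. The face flip $\mu_\alpha$ negates $\mu$ on the creases bordering $\alpha$; $\alpha$ is flippable under $\mu$ if $\mu,\mu_\alpha$ are both locally valid; $f(\mu)$ is the number of flippable faces. For $n\ge 2$, the restriction of a locally valid $\mu'$ on $M_{2,n}$ to the creases of $M_{2,n-1}$ (all but $e_{3n-4},e_{3n-3},e_{3n-2}$)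 is a locally valid $\mu$ on $M_{2,n-1}$; $\mu'$ is blue if $f(\mu')-f(\mu)=2$ and non-blue otherwise. Both locally valid assignments of $M_{2,1}$ are blue. Let $v_n^d$ be the number of locally valid MV assignments of $M_{2,n}$ with exactly $d$ flippable faces, $b_n^d$ the number of these that are blue, and $w_n^d=v_n^d-b_n^d$ the number that are non-blue (all these are $0$ when no such assignment exists). *)

(* Defs.v *)
From mathcomp Require Import all_boot all_order all_algebra.
Set Implicit Arguments. Unset Strict Implicit. Unset Printing Implicit Defensive.

(* Creases of M_{2,n}: e_0 and e_{3k-1}, e_{3k}, e_{3k+1} for k = 1..n-1,
   i.e. the indices i < 3n-1 with i <> 1. *)
Definition crease (n : nat) := {i : 'I_(3 * n - 1) | (i : nat) != 1%N}.

(* An MV assignment: true encodes 1, false encodes -1. *)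
Definition mvassign (n : nat) := {ffun crease n -> bool}.

(* Value of mu on crease e_j (default false for non-creases, never used). *)
Definition mv_at (n : nat) (mu : mvassign n) (j : nat) : bool :=
  match (insub j : option 'I_(3 * n - 1)) with
  | Some i => match (insub i : option (crease n)) with
              | Some c => mu c
              | None => false
              end
  | None => false
  end.

(* Local validity: for each interior vertex x_k, k = 1..n-1, exactly one of
   the top/right/bottom creases differs from the left crease e_{3k-3}. *)
Definition locally_valid (n : nat) (mu : mvassign n) : bool :=
  [forall k : 'I_n, (0 < k)%N ==>
     ((mv_at mu (3 * k - 1) != mv_at mu (3 * k - 3))
      + (mv_at mu (3 * k) != mv_at mu (3 * k - 3))
      + (mv_at mu (3 * k + 1) != mv_at mu (3 * k - 3)) == 1)%N].

(* Face alpha_{i,j}, i in {1,2}, j in {1..n}, is encoded as (i-1, j-1). *)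
Definition face (n : nat) := ('I_2 * 'I_n)%type.

(* Does face alpha_{i,j} (i, j 1-based) border crease e_c ? *)
Definition borders (n i j c : nat) : bool :=
  if i == 1%N then
    [|| (1 < j)%N && (c == 3 * j - 4)%N, (c == 3 * j - 3)%N
      | (j <= n - 1)%N && (c == 3 * j - 1)%N]
  else
    [|| (1 < j)%N && (c == 3 * j - 2)%N, (c == 3 * j - 3)%N
      | (j <= n - 1)%N && (c == 3 * j + 1)%N].

Definition flip (n : nat) (a : face n) (mu : mvassign n) : mvassign n :=
  [ffun c : crease n =>
     if borders n (a.1 : nat).+1 (a.2 : nat).+1 (val (val c)) then ~~ mu c
     else mu c].

Definition flippable (n : nat) (mu : mvassign n) (a : face n) : bool :=
  locally_valid mu && locally_valid (flip a mu).

Definition nflip (n : nat) (mu : mvassign n) : nat :=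
  #|[pred a : face n | flippable mu a]|.

Definition restr (n : nat) (mu : mvassign n) : mvassign n.-1 :=
  [ffun c : crease n.-1 => mv_at mu (val (val c))].

Definition blue (n : nat) (mu : mvassign n) : bool :=
  if (n <= 1)%N then true
  else (Posz (nflip mu) - Posz (nflip (restr mu)) == 2)%R.

Definition vcount (n : nat) (d : int) : nat :=
  #|[pred mu : mvassign n | locally_valid mu && (Posz (nflip mu) == d)]|.

Definition bcount (n : nat) (d : int) : nat :=
  #|[pred mu : mvassign n | [&& locally_valid mu, blue mu & (Posz (nflip mu) == d)]]|.

Definition wcount (n : nat) (d : int) : nat :=
  #|[pred mu : mvassign n | [&& locally_valid mu, ~~ blue mu & (Posz (nflip mu) == d)]]|.

(* Main.v *)
Require Import Defs.
From mathcomp Require Import all_boot all_order all_algebra zify.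
Import GRing.Theory.
Set Implicit Arguments. Unset Strict Implicit. Unset Printing Implicit Defensive.

Lemma card_sum (T : finType) (P : pred T) :
  #|[pred x | P x]| = (\sum_x (P x : nat))%N.
Proof.
rewrite -sum1_card big_mkcond /=; apply: eq_bigr => x _.
by rewrite inE; case: (P x).
Qed.

Lemma mv_atE n (mu : mvassign n) j (Hj : (j < 3 * n - 1)%N) (H1 : j != 1%N) :
  mv_at mu j = mu (Sub (Ordinal Hj) H1).
Proof.
rewrite /mv_at insubT /=.

by case: insubP => [c _ Hc|]; [congr (mu _); apply: val_inj; rewrite Hc|rewrite H1].
Qed.

Lemma mv_at_val n (mu : mvassign n) (c : crease n) : mv_at mu (val (val c)) = mu c.
Proof.
case: c => [[i Hi] H1] /=.
rewrite (@mv_atE _ mu _ Hi H1); congr (mu _); exact: val_inj.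
Qed.

Lemma mv_at1 n (mu : mvassign n) : mv_at mu 1 = false.
Proof.
rewrite /mv_at; case: insubP => [i _ Hi|//].
by rewrite insubN // Hi.
Qed.

Lemma mv_at_out n (mu : mvassign n) j : (3 * n - 1 <= j)%N -> mv_at mu j = false.
Proof. by move=> h; rewrite /mv_at insubN // -leqNgt. Qed.

Section B.
Variables (n k J : nat) (Hk : (0 < k)%N) (Hkn : (k < n)%N) (HJ : (0 < J)%N).
Lemma bT0 : borders n 1 J (3*k-3) = (k == J).
Proof. rewrite /borders /=; apply/idP/idP; lia. Qed.
Lemma bT1 : borders n 1 J (3*k-1) = (k.+1 == J) || (k == J).
Proof. rewrite /borders /=; apply/idP/idP; lia. Qed.
Lemma bT2 : borders n 1 J (3*k) = (k.+1 == J).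
Proof. rewrite /borders /=; apply/idP/idP; lia. Qed.
Lemma bT3 : borders n 1 J (3*k+1) = false.
Proof. rewrite /borders /=; apply/idP/idP; lia. Qed.
Lemma bB0 : borders n 2 J (3*k-3) = (k == J).
Proof. rewrite /borders /=; apply/idP/idP; lia. Qed.
Lemma bB1 : borders n 2 J (3*k-1) = false.
Proof. rewrite /borders /=; apply/idP/idP; lia. Qed.
Lemma bB2 : borders n 2 J (3*k) = (k.+1 == J).
Proof. rewrite /borders /=; apply/idP/idP; lia. Qed.
Lemma bB3 : borders n 2 J (3*k+1) = (k.+1 == J) || (k == J).
Proof. rewrite /borders /=; apply/idP/idP; lia. Qed.
End B.

Lemma mv_at_flip n a (mu : mvassign n) j : (j < 3 * n - 1)%N -> j != 1%N ->
  mv_at (flip a mu) j = mv_at mu j (+) borders n (a.1).+1 (a.2).+1 j.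
Proof.
move=> Hj H1; rewrite !(@mv_atE _ _ _ Hj H1) /flip ffunE /=.
by case: borders; case: (mu _).
Qed.

Definition dT n (mu : mvassign n) k := mv_at mu (3*k-1) != mv_at mu (3*k-3).
Definition dR n (mu : mvassign n) k := mv_at mu (3*k) != mv_at mu (3*k-3).
Definition dB n (mu : mvassign n) k := mv_at mu (3*k+1) != mv_at mu (3*k-3).
Definition vc n (mu : mvassign n) k := (dT mu k + dR mu k + dB mu k == 1)%N.

Lemma lvE n (mu : mvassign n) : locally_valid mu = [forall k : 'I_n, (0 < k)%N ==> vc mu k].
Proof. by []. Qed.

Lemma vc_top (L T R B p q : bool) : ~~ (p && q) -> ((T != L) + (R != L) + (B != L) == 1)%N ->
 (((T (+) (p || q)) != (L (+) q)) + ((R (+) p) != (L (+) q)) + (B != (L (+) q)) == 1)%N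
   = (p ==> ~~ (B != L)) && (q ==> ~~ (T != L)).
Proof. by case: L; case: T; case: R; case: B; case: p; case: q. Qed.

Lemma vc_bot (L T R B p q : bool) : ~~ (p && q) -> ((T != L) + (R != L) + (B != L) == 1)%N ->
 ((T != (L (+) q)) + ((R (+) p) != (L (+) q)) + ((B (+) (p || q)) != (L (+) q)) == 1)%N
   = (p ==> ~~ (T != L)) && (q ==> ~~ (B != L)).
Proof. by case: L; case: T; case: R; case: B; case: p; case: q. Qed.

Lemma vc_flip_top n (mu : mvassign n) (j : 'I_n) k : (0 < k)%N -> (k < n)%N -> vc mu k ->
  vc (flip (ord0, j) mu) k = ((k == j) ==> ~~ dB mu k) && ((k == j.+1) ==> ~~ dT mu k).
Proof.
move=> kp kn H; rewrite /vc /dT /dR /dB in H *; rewrite !mv_at_flip /=; try lia.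
rewrite bT0 // bT1 // bT2 // bT3 // eqSS addbF; apply: vc_top => //; lia.
Qed.

Definition o1 : 'I_2 := @Ordinal 2 1 isT.

Lemma vc_flip_bot n (mu : mvassign n) (j : 'I_n) k : (0 < k)%N -> (k < n)%N -> vc mu k ->
  vc (flip (o1, j) mu) k = ((k == j) ==> ~~ dT mu k) && ((k == j.+1) ==> ~~ dB mu k).
Proof.
move=> kp kn H; rewrite /vc /dT /dR /dB in H *; rewrite !mv_at_flip /=; try lia.
rewrite bB0 // bB1 // bB2 // bB3 // eqSS addbF; apply: vc_bot => //; lia.
Qed.

Lemma forall_pos_lemma n (j : 'I_n) (X Y : nat -> bool) :
  [forall k : 'I_n, (0 < k)%N ==> ((((k:nat) == j) ==> X k) && (((k:nat) == j.+1) ==> Y k))]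
  = (((j:nat) == 0%N) || X j) && ((j.+1 == n) || Y j.+1).
Proof.
apply/forallP/andP.
- move=> H; split.
  + case: (posnP j) => [->//|jp]; have := H j; rewrite jp eqxx /=.
    by case/andP.
  + case: (ltnP j.+1 n) => [jn|jn]; last first.
      by have -> : j.+1 == n by rewrite eqn_leq jn ltn_ord.
    have := H (Ordinal jn); rewrite /= eqxx (gtn_eqF (ltnSn j)) /=.
    by move=> ->; rewrite orbT.
- move=> [h1 h2] k; apply/implyP => kp; apply/andP; split; apply/implyP => /eqP e.
  + by move: h1; rewrite -e (negbTE (lt0n_neq0 kp)).
  + by move: h2; rewrite -e (ltn_eqF (ltn_ord k)).
Qed.

Lemma flippable_top n (mu : mvassign n) (j : 'I_n) : locally_valid mu ->
  flippable mu (ord0, j) = (((j:nat) == 0%N) || ~~ dB mu j) && ((j.+1 == n) || ~~ dT mu j.+1).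
Proof.
move=> lv; rewrite /flippable lv /= lvE -(forall_pos_lemma j (fun k => ~~ dB mu k) (fun k => ~~ dT mu k)); apply: eq_forallb => k.
case: (posnP k) => [->//|kp] /=.
by rewrite vc_flip_top //; move/forallP: lv => /(_ k); rewrite kp.
Qed.

Lemma flippable_bot n (mu : mvassign n) (j : 'I_n) : locally_valid mu ->
  flippable mu (o1, j) = (((j:nat) == 0%N) || ~~ dT mu j) && ((j.+1 == n) || ~~ dB mu j.+1).
Proof.
move=> lv; rewrite /flippable lv /= lvE -(forall_pos_lemma j (fun k => ~~ dT mu k) (fun k => ~~ dB mu k)); apply: eq_forallb => k.
case: (posnP k) => [->//|kp] /=.
by rewrite vc_flip_bot //; move/forallP: lv => /(_ k); rewrite kp.
Qed.

Definition term n (mu : mvassign n) (j : nat) : nat :=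
  ((((j:nat) == 0%N) || ~~ dB mu j) && ((j.+1 == n) || ~~ dT mu j.+1)) +
  ((((j:nat) == 0%N) || ~~ dT mu j) && ((j.+1 == n) || ~~ dB mu j.+1)).

Lemma nflipE n (mu : mvassign n) : locally_valid mu ->
  nflip mu = (\sum_(j < n) term mu j)%N.
Proof.
move=> lv; rewrite /nflip card_sum -(pair_big xpredT xpredT (fun (i : 'I_2) (j : 'I_n) => (flippable mu (i, j) : nat))) /=.
rewrite big_ord_recl big_ord1 -big_split /=; apply: eq_bigr => j _.
rewrite (flippable_top _ lv).
have -> : (lift ord0 ord0 : 'I_2) = o1 by apply: val_inj.
by rewrite (flippable_bot _ lv).
Qed.

Lemma mv_at_restr n (mu : mvassign n) j : (j < 3 * n.-1 - 1)%N ->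
  mv_at (restr mu) j = mv_at mu j.
Proof.
move=> Hj; case: (eqVneq j 1%N) => [->|H1]; first by rewrite !mv_at1.
by rewrite (@mv_atE _ _ _ Hj H1) /restr ffunE.
Qed.

Lemma vc_restr p (mu : mvassign p.+2) k : (k <= p)%N -> vc (restr mu) k = vc mu k.
Proof. by move=> kp; rewrite /vc /dT /dR /dB !mv_at_restr //=; lia. Qed.

Lemma dT_restr p (mu : mvassign p.+2) k : (k <= p)%N -> dT (restr mu) k = dT mu k.
Proof. by move=> kp; rewrite /dT !mv_at_restr //=; lia. Qed.

Lemma dB_restr p (mu : mvassign p.+2) k : (k <= p)%N -> dB (restr mu) k = dB mu k.
Proof. by move=> kp; rewrite /dB !mv_at_restr //=; lia. Qed.

Lemma lv_split p (mu : mvassign p.+2) :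
  locally_valid mu = locally_valid (restr mu) && vc mu p.+1.
Proof.
rewrite !lvE; apply/forallP/andP.
- move=> H; split.
  + apply/forallP => k; have := H (widen_ord (leqnSn _) k); rewrite /= vc_restr //.
    by rewrite -ltnS.
  + by have := H ord_max.
- move=> [/forallP H1 H2] k; case: (ltnP k p.+1) => kp.
  + by have := H1 (Ordinal kp); rewrite /= vc_restr.
  + have -> : (k : nat) = p.+1 by have := ltn_ord k; lia.
    by rewrite H2 implybT.
Qed.

Definition lastB m (mu : mvassign m) := (m.-1 == 0%N) || ~~ dB mu m.-1.
Definition lastT m (mu : mvassign m) := (m.-1 == 0%N) || ~~ dT mu m.-1.

Definition Dfun m (mu : mvassign m) (X Y : bool) : nat :=
  if X && Y then 2 else if X then ~~ lastT mu : nat else ~~ lastB mu : nat.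

Lemma nflip_split p (mu : mvassign p.+2) : locally_valid mu ->
  nflip mu = (nflip (restr mu) + Dfun (restr mu) (~~ dT mu p.+1) (~~ dB mu p.+1))%N.
Proof.
move=> lv; have := lv; rewrite lv_split => /andP[lvr vcp].
rewrite !nflipE //= !big_ord_recr /= -addnA -!addnA; congr addn.
  apply: eq_bigr => j _; have jp := ltn_ord j; rewrite /term /=.
  rewrite !dT_restr; try lia. rewrite !dB_restr; try lia.
have -> : (p.+1 == p.+2) = false by apply/negbTE; lia.
rewrite /term /Dfun /lastT /lastB !eqxx /= !dT_restr // !dB_restr //.
move: vcp; rewrite /vc.
case: (dT mu p.+1); case: (dB mu p.+1); case: (dR mu p.+1); case: (p == 0%N);
  case: (dT mu p); case: (dB mu p) => //=.
Qed.

Lemma blue_split p (mu : mvassign p.+2) : locally_valid mu ->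
  blue mu = ~~ dT mu p.+1 && ~~ dB mu p.+1.
Proof.
move=> lv; have := lv; rewrite lv_split => /andP[_ vcp].
rewrite /blue /= (nflip_split lv) PoszD addrAC subrr add0r /Dfun.
move: vcp; rewrite /vc.
by case: (dT mu p.+1); case: (dB mu p.+1); case: (dR mu p.+1);
  case: (lastT (restr mu)); case: (lastB (restr mu)).
Qed.

Lemma blue_last m (mu : mvassign m) : (0 < m)%N -> locally_valid mu ->
  blue mu = lastB mu && lastT mu.
Proof.
case: m mu => [//|[|p]] mu _ lv; first by rewrite /blue /lastB /lastT.
by rewrite blue_split // /lastB /lastT /= andbC.
Qed.

Lemma lastBT m (mu : mvassign m) : (0 < m)%N -> locally_valid mu ->
  lastB mu || lastT mu.
Proof.
case: m mu => [//|[|p]] mu _ lv; first by rewrite /blue /lastB /lastT.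
move: lv; rewrite lv_split /lastB /lastT /= /vc => /andP[_].
by case: (dT mu p.+1); case: (dB mu p.+1); case: (dR mu p.+1).
Qed.

Definition ext p (mu : mvassign p.+1) (t : bool * bool * bool) : mvassign p.+2 :=
  [ffun c : crease p.+2 => let i := val (val c) in
     if (i < 3 * p + 2)%N then mv_at mu i
     else if i == (3 * p + 2)%N then t.1.1
     else if i == (3 * p + 3)%N then t.1.2 else t.2].

Definition triple p (mu : mvassign p.+2) : bool * bool * bool :=
  (mv_at mu (3 * p + 2), mv_at mu (3 * p + 3), mv_at mu (3 * p + 4)).

Lemma mv_at_ext p (mu : mvassign p.+1) t i : (i < 3 * p + 5)%N -> i != 1%N ->
  mv_at (ext mu t) i = if (i < 3 * p + 2)%N then mv_at mu i
     else if i == (3 * p + 2)%N then t.1.1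
     else if i == (3 * p + 3)%N then t.1.2 else t.2.
Proof.
move=> Hi H1; have Hi' : (i < 3 * p.+2 - 1)%N by lia.
by rewrite (@mv_atE _ _ _ Hi' H1) ffunE.
Qed.

Lemma restr_ext p (mu : mvassign p.+1) t : restr (ext mu t) = mu.
Proof.
apply/ffunP => c; rewrite ffunE; case: c => [[i Hi] H1] /=.
have Hi2 : (i < 3 * p + 2)%N by have := Hi; rewrite /=; lia.
rewrite mv_at_ext //=; last by lia.
rewrite Hi2.
exact: (@mv_atE p.+1 mu i Hi H1).
Qed.

Lemma triple_ext p (mu : mvassign p.+1) t : triple (ext mu t) = t.
Proof.
case: t => [[x y] z]; rewrite /triple !mv_at_ext //=; try lia.
rewrite ltnn eqxx.
have -> : (3 * p + 3 < 3 * p + 2)%N = false by apply/negbTE; lia.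
have -> : (3 * p + 3 == 3 * p + 2)%N = false by apply/negbTE; lia.
have -> : (3 * p + 4 < 3 * p + 2)%N = false by apply/negbTE; lia.
have -> : (3 * p + 4 == 3 * p + 2)%N = false by apply/negbTE; lia.
have -> : (3 * p + 4 == 3 * p + 3)%N = false by apply/negbTE; lia.
by rewrite eqxx.
Qed.

Lemma ext_restr p (mu : mvassign p.+2) : ext (restr mu) (triple mu) = mu.
Proof.
apply/ffunP => c; rewrite ffunE -mv_at_val; case: c => [[i Hi] H1] /=.
case: ltnP => h1.
  by apply: (@mv_at_restr p.+2 mu i); rewrite /=; lia.
case: (eqVneq i (3 * p + 2)%N) => [->|h2]; first by rewrite ?eqxx.
case: (eqVneq i (3 * p + 3)%N) => [->|h3]; first by rewrite ?eqxx.
by have -> : i = (3 * p + 4)%N by have := Hi; lia.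
Qed.

Lemma sum_ext p (G : mvassign p.+1 -> bool * bool * bool -> nat) :
  (\sum_(mu : mvassign p.+2) G (restr mu) (triple mu) =
   \sum_(mu : mvassign p.+1) \sum_t G mu t)%N.
Proof.
rewrite (reindex (fun q : mvassign p.+1 * (bool * bool * bool) => ext q.1 q.2)) /=.
  rewrite (pair_big xpredT xpredT (fun mu t => G mu t)) /=.
  by apply: eq_bigr => -[mu t] _; rewrite restr_ext triple_ext.
apply: onW_bij; exists (fun mu => (restr mu, triple mu)).
  by move=> [mu t]; rewrite restr_ext triple_ext.
by move=> mu; rewrite ext_restr.
Qed.

Lemma sum_bool3 (G : bool * bool * bool -> nat) :
  (\sum_t G t = G (true, true, true) + G (true, true, false) + G (true, false, true)
    + G (true, false, false) + G (false, true, true) + G (false, true, false)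
    + G (false, false, true) + G (false, false, false))%N.
Proof.
have -> : (\sum_t G t = \sum_(t : (bool * bool) * bool) G (t.1, t.2))%N.
  by apply: eq_bigr => -[].
rewrite -(pair_big xpredT xpredT (fun xy z => G (xy, z))) /=.
have -> : (\sum_(xy : bool * bool) \sum_z G (xy, z) =
   \sum_(xy : bool * bool) \sum_z G ((xy.1, xy.2), z))%N.
  by apply: eq_bigr => -[].
rewrite -(pair_big xpredT xpredT (fun x y => \sum_z G ((x, y), z))) /=.
rewrite !big_bool /=; lia.
Qed.

Lemma last_triple p (mu : mvassign p.+2) :
  let L := mv_at (restr mu) (3 * p) in
  [/\ dT mu p.+1 = ((triple mu).1.1 != L), dR mu p.+1 = ((triple mu).1.2 != L)
    & dB mu p.+1 = ((triple mu).2 != L)].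
Proof.
have -> : mv_at (restr mu) (3 * p) = mv_at mu (3 * p).
  by apply: (@mv_at_restr p.+2 mu); rewrite /=; lia.
rewrite /dT /dR /dB /triple /=.
have -> : (3 * p.+1 - 1 = 3 * p + 2)%N by lia.
have -> : (3 * p.+1 - 3 = 3 * p)%N by lia.
have -> : (3 * p.+1 = 3 * p + 3)%N by lia.
by have -> : (3 * p + 3 + 1 = 3 * p + 4)%N by lia.
Qed.

Lemma count_split p (P : mvassign p.+2 -> bool) (K : mvassign p.+1 -> bool -> bool -> bool) :
  (forall mu, locally_valid mu -> P mu = K (restr mu) (~~ dT mu p.+1) (~~ dB mu p.+1)) ->
  (\sum_(mu : mvassign p.+2) (locally_valid mu && P mu : nat) =
   \sum_(mu : mvassign p.+1) (locally_valid mu : nat) *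
      (K mu false true + K mu true true + K mu true false))%N.
Proof.
move=> HP.
pose G (mu : mvassign p.+1) (t : bool * bool * bool) : nat :=
  let L := mv_at mu (3 * p) in
  [&& locally_valid mu, ((t.1.1 != L) + (t.1.2 != L) + (t.2 != L) == 1)%N &
      K mu (t.1.1 == L) (t.2 == L)].
have E : forall mu : mvassign p.+2, (locally_valid mu && P mu : nat) = G (restr mu) (triple mu).
  move=> mu; rewrite /G; have [eT eR eB] := last_triple mu.
  case lvm: (locally_valid mu).
    move: (lvm); rewrite lv_split => /andP[-> vcp].
    move: vcp; rewrite /vc eT eR eB => -> /=.
    by rewrite HP // eT eB !negbK.
  move: lvm; rewrite lv_split /vc eT eR eB.
  by case: (locally_valid (restr mu)) => //= ->.
rewrite (eq_bigr _ (fun mu _ => E mu)) sum_ext; apply: eq_bigr => mu _.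
rewrite sum_bool3 /G; case: (locally_valid mu); case: (mv_at mu (3 * p)) => /=;
  rewrite -?[true == true]/true -?[false == true]/false -?[true == false]/false -?[false == false]/true; lia.
Qed.

Lemma intsh (m k : nat) (d : int) : (Posz (m + k)%N == d) = (Posz m == (d - Posz k)%R).
Proof. by rewrite PoszD [RHS]eq_sym subr_eq eq_sym. Qed.

Lemma bcount_rec p d : bcount p.+2 d = vcount p.+1 (d - 2)%R.
Proof.
rewrite /bcount /vcount !card_sum.
rewrite (@count_split p _ (fun mu X Y => X && Y && (Posz (nflip mu + Dfun mu X Y)%N == d))).
  apply: eq_bigr => mu _; rewrite /Dfun /= intsh.
  by case: (locally_valid mu) => /=; lia.
by move=> mu lv; rewrite blue_split // (nflip_split lv).
Qed.

Lemma vbw n d : vcount n d = (bcount n d + wcount n d)%N.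
Proof.
rewrite /bcount /vcount /wcount !card_sum -big_split; apply: eq_bigr => mu _ /=.
by case: (locally_valid mu); case: (blue mu); case: (_ == d).
Qed.

Lemma wcount_rec q d : wcount q.+3 d =
  (vcount q.+2 d + wcount q.+2 (d - 1)%R + vcount q.+1 (d - 2)%R)%N.
Proof.
rewrite -bcount_rec /wcount /vcount /bcount !card_sum -!big_split.
rewrite (@count_split q.+1 _ (fun mu X Y => ~~ (X && Y) && (Posz (nflip mu + Dfun mu X Y)%N == d))).
  apply: eq_bigr => mu _; rewrite /Dfun /=.
  case lvm: (locally_valid mu) => /=; last by [].
  rewrite (blue_last _ lvm) //; have := lastBT (isT : (0 < q.+2)%N) lvm.
  case: (lastB mu); case: (lastT mu) => //= _; rewrite ?addn0 ?intsh /=; lia.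
by move=> mu lv; rewrite blue_split // (nflip_split lv).
Qed.

Local Open Scope ring_scope.

Theorem proposition4p10 (n : nat) (d : int) : (3 <= n)%N ->
  [/\ bcount n d = vcount n.-1 (d - 2),
      wcount n d = (vcount n.-1 d + wcount n.-1 (d - 1) + vcount n.-2 (d - 2))%N
    & vcount n d = (vcount n.-1 d + wcount n.-1 (d - 1) + vcount n.-1 (d - 2)
                    + vcount n.-2 (d - 2))%N].
Proof.
case: n => [|[|[|q]]] //= _.
have hb := bcount_rec q.+1 d; have hw := wcount_rec q d.
split => //; rewrite vbw hb hw /=; lia.
Qed.
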